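(* Let $\Delta\geq 3$ be an integer and let $G$ be a triangle-free $\Delta$-regular graph. Then $$\alpha(G)\geq \frac{1}{2}\left(1+\frac{(\Delta-1)(\Delta+1)}{2^{\Delta}\Delta^2+(\Delta-1)(\Delta+1)}\right)\mathrm{diss}(G).$$
   Context: All graphs are finite, simple and undirected. $\alpha(G)$ is the independence number. A set $D$ of vertices is a dissociation set if the induced subgraph $G[D]$ has maximum degree at most $1$; $\mathrm{diss}(G)$ is the maximum order of a dissociation set. *)

(* Defs.v *)
From mathcomp Require Import all_boot all_order all_algebra.
Set Implicit Arguments. Unset Strict Implicit. Unset Printing Implicit Defensive.

Definition simple_graph (T : finType) (e : rel T) : Prop :=
  symmetric e /\ irreflexive e.

Definition nbhd (T : finType) (e : rel T) (v : T) : {set T} := [set w | e v w].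
Definition regular (T : finType) (e : rel T) (d : nat) : Prop :=
  forall v : T, #|nbhd e v| = d.

Definition triangle_free (T : finType) (e : rel T) : Prop :=
  forall x y z : T, ~~ [&& e x y, e y z & e z x].

Definition independent (T : finType) (e : rel T) (S : {set T}) : bool :=
  [forall x in S, forall y in S, ~~ e x y].

Definition dissociation (T : finType) (e : rel T) (D : {set T}) : bool :=
  [forall x in D, #|D :&: nbhd e x| <= 1].

Definition alpha (T : finType) (e : rel T) : nat :=
  \max_(S : {set T} | independent e S) #|S|.
Definition diss (T : finType) (e : rel T) : nat :=
  \max_(D : {set T} | dissociation e D) #|D|.

(* Main.v *)
Require Import Defs.
From mathcomp Require Import all_boot all_order all_algebra zify.
Set Implicit Arguments. Unset Strict Implicit. Unset Printing Implicit Defensive.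

Lemma card_bigcup_le (T I : finType) (A : {pred I}) (F : I -> {set T}) :
  #|\bigcup_(i in A) F i| <= \sum_(i in A) #|F i|.
Proof.
elim/big_rec2: _ => [|i n S _ h]; first by rewrite cards0.
apply: leq_trans (leq_card_setU _ _).1 _; exact: leq_add.
Qed.

Lemma card_sep (T : finType) (A : {set T}) (q : pred T) :
  #|[set x in A | q x]| = \sum_(x in A) q x.
Proof.
rewrite -sum1_card big_mkcond [RHS]big_mkcond; apply: eq_bigr => x _.
by rewrite inE; case: (x \in A); case: (q x).
Qed.

Lemma greedy (T : finType) (h : rel T) (d : nat) :
  symmetric h -> irreflexive h ->
  forall A : {set T}, (forall a, a \in A -> #|[set y in A | h a y]| <= d) ->
  exists X : {set T}, [/\ X \subset A, (forall x y, x \in X -> y \in X -> ~~ h x y)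
     & #|A| <= d.+1 * #|X|].
Proof.
move=> hs hi A; have [n] := ubnP #|A|; elim: n A => // n IH A HA Hdeg.
case: (set_0Vmem A) => [->|[a aA]].
  by exists set0; split; [exact: sub0set | move=> x y; rewrite inE | by rewrite cards0 muln0].
set N := a |: [set y in A | h a y].
have NA : N \subset A by apply/subsetP => y; rewrite !inE => /orP[/eqP->|/andP[]].
have cN : #|N| <= d.+1 by rewrite cardsU1 -add1n; apply: leq_add; [case: (_ \notin _) | exact: Hdeg].
have [X [XA Xi cX]] : exists X : {set T}, [/\ X \subset A :\: N,
   (forall x y, x \in X -> y \in X -> ~~ h x y) & #|A :\: N| <= d.+1 * #|X|].
  apply: IH.
    rewrite -ltnS; apply: leq_trans HA; rewrite ltnS; apply: proper_card.
    by apply/properP; split; [exact: subsetDl | exists a; rewrite // !inE eqxx].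
  move=> b bA; apply: leq_trans (Hdeg b _); last by move: bA; rewrite inE => /andP[].
  by apply: subset_leq_card; apply/subsetP => y; rewrite !inE => /andP[/andP[_ ->] ->].
have aX : a \notin X by apply/negP => /(subsetP XA); rewrite !inE eqxx.
exists (a |: X); split.
- by rewrite subUset sub1set aA (subset_trans XA) // subsetDl.
- have key : forall y, y \in X -> ~~ h a y.
    move=> y /(subsetP XA); rewrite !inE => /andP[/norP[_]]; rewrite negb_and.
    by case/orP => [/negPf->|].
  move=> x y; rewrite !inE => /orP[/eqP->|xX] /orP[/eqP->|yX].
  + by rewrite hi.
  + exact: key.
  + by rewrite hs; exact: key.
  + exact: Xi.
- rewrite cardsU1 aX -(cardsID N A) (setIidPr NA) mulnDr muln1 addnC.
  by rewrite addnC; apply: leq_add.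
Qed.
Lemma arith_core (a b d K t m xs g : nat) :
  m * (d - 1) <= d * g + d * d * t -> g <= K * xs ->
  2 * (b + a) * (d * d) <= b * (d * K) -> a * (d * K) <= 2 * (b + a) * (d - 1) ->
  0 < d * K ->
  a * m <= b * t + 2 * (b + a) * xs.
Proof.
move=> H1 H2 C1 C2 pos.
have H3 : m * (d - 1) <= d * K * xs + d * d * t.
  apply: leq_trans H1 _; rewrite leq_add2r -mulnA leq_mul2l H2 orbT //.
rewrite -(leq_pmul2r pos).
have H4 := leq_mul (leqnn (2 * (b + a))) H3.
have H5 := leq_mul (leqnn m) C2.
have H6 := leq_mul (leqnn t) C1.
nia.
Qed.
Lemma pow_aux n : (n + 4) ^ 2 + 2 * (n + 4) + 2 <= 2 ^ (n + 5).
Proof.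
elim: n => [|n IH]; first by [].
rewrite (_ : n.+1 + 5 = (n + 5).+1) ?expnS; last by lia.
nia.
Qed.

Lemma pow_main d : 3 <= d -> d ^ 4 + 2 * d ^ 3 + d + 2 <= 2 * 2 ^ d * d ^ 2.
Proof.
case: d => [|[|[|[|n]]]] // _.
have := pow_aux n; rewrite (_ : n.+4 = n + 4); last by lia.
rewrite (_ : 2 * 2 ^ (n + 4) = 2 ^ (n + 5)); last by rewrite -expnS; congr (_ ^ _); lia.
move=> H; have H' := leq_mul H (leqnn ((n + 4) ^ 2)). nia.
Qed.

Lemma C1 d B : 3 <= d -> 8 <= B ->
  2 * (B * d ^ 2 + (d - 1) * (d + 1)) * (d * d) <= B * d ^ 2 * (d * (d + d * d).+1).
Proof. move=> h hB. have {h} [n ->] : exists n, d = n + 3 by exists (d - 3); lia. nia. Qed.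

Lemma C2 d B : 3 <= d -> d ^ 4 + 2 * d ^ 3 + d + 2 <= 2 * B * d ^ 2 ->
  (d - 1) * (d + 1) * (d * (d + d * d).+1) <= 2 * (B * d ^ 2 + (d - 1) * (d + 1)) * (d - 1).
Proof. move=> h hB. have {h} [n E] : exists n, d = n + 3 by exists (d - 3); lia. subst d. nia. Qed.
Section Main.
Variables (T : finType) (e : rel T) (Delta : nat).
Hypotheses (Hsym : symmetric e) (Hirr : irreflexive e)
  (Hreg : regular e Delta) (Htf : triangle_free e).
Variable D : {set T}.
Hypothesis HD : dissociation e D.

Let N := nbhd e.
Definition II := [set u in D | D :&: N u == set0].
Definition PP := [set u in D | #|D :&: N u| == 1].
Definition pp u := odflt u [pick v in D :&: N u].

Lemma inN u v : (v \in N u) = e u v.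
Proof. by rewrite /N /nbhd inE. Qed.

Lemma HD' u : u \in D -> #|D :&: N u| <= 1.
Proof. by move=> uD; move/forall_inP: HD => /(_ u uD). Qed.

Lemma notri x y z : e x y -> e y z -> e z x -> False.
Proof. by move=> h1 h2 h3; move: (Htf x y z); rewrite h1 h2 h3. Qed.

Lemma PD u : u \in PP -> u \in D.
Proof. by rewrite inE => /andP[]. Qed.

Lemma ppP u : u \in PP -> D :&: N u = [set pp u].
Proof.
rewrite inE => /andP[_ /cards1P[v Hv]]; rewrite /pp Hv.
case: pickP => [w|/(_ v)]; last by rewrite inE eqxx.
by rewrite inE => /eqP->.
Qed.

Lemma ppD u : u \in PP -> pp u \in D /\ e u (pp u).
Proof.
move=> /ppP H; have : pp u \in D :&: N u by rewrite H set11.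
by rewrite inE inN => /andP[].
Qed.

Lemma pp_uniq u v : u \in PP -> v \in D -> e u v -> v = pp u.
Proof.
move=> /ppP H vD euv; have : v \in D :&: N u by rewrite inE vD inN.
by rewrite H inE => /eqP.
Qed.

Lemma ppPP u : u \in PP -> pp u \in PP.
Proof.
move=> uP; have [pD eup] := ppD uP; rewrite inE pD /= eqn_leq HD' //=.
rewrite card_gt0; apply/set0Pn; exists u; rewrite inE PD // inN Hsym //.
Qed.

Lemma ppK u : u \in PP -> pp (pp u) = u.
Proof.
move=> uP; have [pD eup] := ppD uP; symmetry.
by apply: pp_uniq; [exact: ppPP | exact: PD | rewrite Hsym].
Qed.

Lemma pp_neq u : u \in PP -> pp u != u.
Proof. move=> /ppD[_ h]; apply/eqP => E; by rewrite E Hirr in h. Qed.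

Lemma II_noD u v : u \in II -> v \in D -> ~~ e u v.
Proof.
rewrite inE => /andP[_ /eqP H] vD; apply/negP => euv.
have : v \in D :&: N u by rewrite inE vD inN.
by rewrite H inE.
Qed.

Lemma D_split : D = II :|: PP.
Proof.
apply/setP => u; rewrite !inE; case uD: (u \in D) => //=.
have := HD' uD; rewrite -cards_eq0; case: #|_| => [|[|]] //.
Qed.

Lemma II_PP : [disjoint II & PP].
Proof.
rewrite -setI_eq0; apply/eqP/setP => u; rewrite !inE -cards_eq0.
by case: (u \in D) => //=; case: #|_|.
Qed.


Definition Good := [set w in ~: D | [forall i in II, ~~ e w i]].
Definition hh x y := e x y || [exists u in PP, e x u && e (pp u) y].

Lemma hh_imp x y : hh x y -> hh y x.
Proof.
case/orP => [exy|/exists_inP[u uP /andP[a b]]]; first by rewrite /hh Hsym exy.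
apply/orP; right; apply/exists_inP; exists (pp u); first exact: ppPP.
by rewrite Hsym b ppK // Hsym a.
Qed.

Lemma hh_sym : symmetric hh.
Proof. by move=> x y; apply/idP/idP => /hh_imp. Qed.

Lemma hh_irr : irreflexive hh.
Proof.
move=> x; rewrite /hh Hirr /=; apply/exists_inP => -[u uP /andP[a b]].
exact: (notri a (ppD uP).2 b).
Qed.

Lemma cardN u : #|N u| = Delta.
Proof. exact: Hreg. Qed.

Lemma hh_deg x : #|[set y in Good | hh x y]| <= Delta + Delta * Delta.
Proof.
apply: leq_trans (_ : #|N x :|: \bigcup_(u in PP :&: N x) N (pp u)| <= _).
  apply: subset_leq_card; apply/subsetP => y; rewrite !inE => /andP[_]; rewrite /hh.
  case/orP => [exy|/exists_inP[u uP /andP[a b]]]; first by rewrite exy.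
  apply/orP; right; apply/bigcupP; exists u.
  by rewrite in_setI uP inN a.
  by rewrite inN b.
apply: leq_trans (leq_card_setU _ _).1 _; rewrite cardN leq_add2l.
apply: leq_trans (card_bigcup_le _ _) _.
rewrite (eq_bigr (fun _ => Delta)) ?sum_nat_const; last by move=> u _; exact: cardN.
rewrite mulnC leq_mul2l; apply/orP; right; rewrite -(cardN x).
by apply: subset_leq_card; apply: subsetIr.
Qed.

Lemma sum_mem (A : {set T}) : \sum_w (w \in A) = #|A|.
Proof. by rewrite -sum1_card [RHS]big_mkcond /=; apply: eq_bigr => w _; case: (w \in A). Qed.

Lemma sum_nbhd i : \sum_w e w i = Delta.
Proof.
rewrite -(cardN i) -sum_mem; apply: eq_bigr => w _; by rewrite inN Hsym.
Qed.

Lemma count_edges : #|PP| * (Delta - 1) <= Delta * #|Good| + Delta * Delta * #|II|.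
Proof.
have Hu : forall u, u \in PP -> \sum_(w in ~: D) e u w = Delta - 1.
  move=> u uP; rewrite -card_sep.
  have := cardsID D (N u); rewrite setIC ppP // cards1 cardN => <-.
  rewrite addKn; apply: eq_card => w; rewrite !inE.
  by [].
rewrite -sum_nat_const -(eq_bigr _ Hu) exchange_big /=.
apply: leq_trans (_ : \sum_(w in ~: D) (Delta * (w \in Good) + Delta * \sum_(i in II) e w i) <= _).
  apply: leq_sum => w wW.
  have H1 : \sum_(u in PP) e u w <= Delta.
    rewrite -card_sep -(cardN w); apply: subset_leq_card; apply/subsetP => u.
    by rewrite !inE Hsym => /andP[].
  case wG: (w \in Good); first by rewrite muln1 (leq_trans H1) // leq_addr.
  apply: (leq_trans H1); apply: leq_trans (leq_addl _ _); rewrite leq_pmulr //.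
  move: wG; rewrite inE wW /= => /negbT/forall_inPn[i iI].
  rewrite negbK => ewi; rewrite (bigD1 i) //= ewi.
  by case: (Delta) => //.
rewrite big_split /=; apply: leq_add.
  rewrite -big_distrr /= leq_mul2l; apply/orP; right; rewrite -sum_mem.
  rewrite [X in X <= _]big_mkcond; apply: leq_sum => w _; by case: ifP.
rewrite -big_distrr -mulnA leq_mul2l; apply/orP; right.
apply: leq_trans (_ : \sum_w \sum_(i in II) e w i <= _).
  rewrite [X in X <= _]big_mkcond; apply: leq_sum => w _; by case: ifP.
rewrite exchange_big /= (eq_bigr (fun _ => Delta)); last by move=> i _; exact: sum_nbhd.
by rewrite sum_nat_const mulnC.
Qed.

Section WithX.
Variable X : {set T}.
Hypotheses (XG : X \subset Good) (Xi : forall x y, x \in X -> y \in X -> ~~ hh x y).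

Definition noX u := [forall x in X, ~~ e u x].
Definition YY := [set u in PP | noX u && (~~ noX (pp u) || (enum_rank u < enum_rank (pp u))%N)].

Lemma inYY v : (v \in YY) = [&& v \in PP, noX v & (~~ noX (pp v) || (enum_rank v < enum_rank (pp v))%N)].
Proof. by rewrite inE. Qed.

Lemma pair_noX u : u \in PP -> noX u || noX (pp u).
Proof.
move=> uP; apply/contraT; rewrite negb_or => /andP[/forall_inPn[x1 x1X e1] /forall_inPn[x2 x2X e2]].
move: e1 e2; rewrite !negbK => e1 e2.
have : hh x1 x2.
  by apply/orP; right; apply/exists_inP; exists u => //; rewrite Hsym e1 e2.
by rewrite (negPf (Xi x1X x2X)).
Qed.

Lemma YP : YY \subset PP.
Proof. by apply/subsetP => u; rewrite inE => /andP[]. Qed.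

Lemma Y_flip u : u \in PP -> (pp u \in YY) = (u \notin YY).
Proof.
move=> uP; rewrite !inYY ppPP // ppK // uP /=.
have hr : enum_rank u != enum_rank (pp u).
  by apply/negP => /eqP/enum_rank_inj E; move: (pp_neq uP); rewrite -E eqxx.
have := pair_noX uP; case: (noX u); case: (noX (pp u)) => //= _.
have hr' : (enum_rank u : nat) != enum_rank (pp u) by [].
by move: hr'; case: ltngtP.
Qed.

Lemma card_PP : #|PP| = 2 * #|YY|.
Proof.
have E : PP :\: YY = pp @: YY.
  apply/setP => v; apply/idP/idP.
    rewrite inE => /andP[vY vP]; apply/imsetP; exists (pp v); last by rewrite ppK.
    by rewrite Y_flip.
  case/imsetP => u uY ->; have uP := subsetP YP u uY.
  by rewrite inE ppPP // Y_flip // uY.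
rewrite -(cardsID YY PP) (setIidPr YP) E card_in_imset; first by rewrite mul2n addnn.
move=> a b aY bY hab; by rewrite -(ppK (subsetP YP a aY)) hab ppK // (subsetP YP).
Qed.

Definition SS := II :|: X :|: YY.

Lemma XnD x : x \in X -> x \notin D.
Proof. by move/(subsetP XG); rewrite !inE => /andP[]. Qed.

Lemma XnI x i : x \in X -> i \in II -> ~~ e x i.
Proof. move=> /(subsetP XG) xG iI; move: xG; rewrite in_set => /andP[_ /forall_inP H]; exact: H. Qed.

Lemma IID i : i \in II -> i \in D.
Proof. by rewrite inE => /andP[]. Qed.

Lemma YD y : y \in YY -> y \in D.
Proof. by move=> /(subsetP YP); exact: PD. Qed.

Lemma YnX y x : y \in YY -> x \in X -> ~~ e y x.
Proof. move=> yY xX; move: yY; rewrite inYY => /and3P[_ /forall_inP H _]; exact: H. Qed.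

Lemma SS_indep x y : x \in SS -> y \in SS -> ~~ e x y.
Proof.
rewrite /SS !in_setU -!orbA => /or3P[xI|xX|xY] /or3P[yI|yX|yY].
- exact: II_noD (IID yI).
- by rewrite Hsym; exact: XnI.
- exact: II_noD (YD yY).
- exact: XnI.
- by have := Xi xX yX; rewrite /hh negb_or => /andP[].
- by rewrite Hsym; exact: YnX.
- by rewrite Hsym; exact: II_noD (YD xY).
- exact: YnX.
- apply/negP => exy; have xP := subsetP YP x xY.
  have E := pp_uniq xP (YD yY) exy.
  by move: (Y_flip xP); rewrite -E yY xY.
Qed.

Lemma card_SS : #|SS| = #|II| + #|X| + #|YY|.
Proof.
have cU : forall A B : {set T}, (forall x, x \in A -> x \notin B) -> #|A :|: B| = #|A| + #|B|.
  move=> A B H; rewrite cardsU; suff -> : A :&: B = set0 by rewrite cards0 subn0.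
  apply/setP => x; rewrite !inE; apply/negP => /andP[a b]; by move: (H x a); rewrite b.
rewrite /SS cU.
  rewrite cU //; move=> x xI; apply/negP => /XnD; by rewrite IID.
move=> x; rewrite in_setU => /orP[xI|/XnD xD].
  apply/negP => /(subsetP YP) xP; have := II_PP; rewrite -setI_eq0 => /eqP/setP/(_ x).
  by rewrite in_setI xI xP in_set0.
by apply/negP => /YD; apply/negP.
Qed.

End WithX.

Lemma card_D : #|D| = #|II| + #|PP|.
Proof.
by rewrite {1}D_split cardsU (disjoint_setI0 II_PP) cards0 subn0.
Qed.

Lemma main_nat : 3 <= Delta ->
  (2 ^ Delta * Delta ^ 2 + 2 * ((Delta - 1) * (Delta + 1))) * #|D| <=
  2 * (2 ^ Delta * Delta ^ 2 + (Delta - 1) * (Delta + 1)) * alpha e.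
Proof.
move=> h3.
have [X [XG Xi cX]] := greedy hh_sym hh_irr (fun a _ => hh_deg a).
have Hal : #|II| + #|X| + #|YY X| <= alpha e.
  rewrite -(card_SS XG) /alpha; apply: (leq_bigmax_cond (F := fun S : {set T} => #|S|) (SS X)).
  apply/forall_inP => x xS; apply/forall_inP => y yS; exact: (SS_indep XG Xi).
have Hm := card_PP Xi.
have Hc := count_edges.
have Hd := card_D.
have B8 : 8 <= 2 ^ Delta by rewrite (_ : 8 = 2 ^ 3) // leq_pexp2l.
have K1 := C1 h3 B8.
have K2 := C2 h3 (pow_main h3).
have pos : 0 < Delta * (Delta + Delta * Delta).+1 by rewrite muln_gt0 (leq_trans _ h3).
have core := arith_core Hc cX K1 K2 pos.
rewrite Hd; move: Hal core Hm.
set a := (Delta - 1) * (Delta + 1); set b := 2 ^ Delta * Delta ^ 2.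
move=> Hal core Hm.
apply: leq_trans (_ : 2 * (b + a) * (#|II| + #|X| + #|YY X|) <= _); last by rewrite leq_mul2l Hal orbT.
rewrite Hm; nia.
Qed.
End Main.
From mathcomp Require Import ring.
Local Open Scope ring_scope.
Import Order.TTheory GRing.Theory Num.Theory.
Lemma ratid (A B M : nat) : (0 < B)%N ->
  (1 / 2 : rat) * (1 + A%:R / (B%:R + A%:R)) * M%:R
   = ((B + 2 * A) * M)%N%:R / (2 * (B + A))%N%:R.
Proof.
move=> pb; have nz : (B%:R + A%:R : rat) != 0.
  by rewrite -natrD pnatr_eq0 -lt0n ltn_addr.
rewrite !natrM !natrD; field; exact: nz.
Qed.

Theorem theorem2 (T : finType) (e : rel T) (Delta : nat) :
  (3 <= Delta)%N ->
  simple_graph e -> regular e Delta -> triangle_free e ->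
  (alpha e)%:R >=
    (1 / 2 : rat) *
    (1 + ((Delta - 1)%:R * (Delta + 1)%:R) /
         ((2 ^ Delta * Delta ^ 2)%:R + (Delta - 1)%:R * (Delta + 1)%:R))
    * (diss e)%:R.
Proof.
move=> h3 [Hs Hi] Hr Ht.
have [D0 HD0 Hmax] : {D0 | D0 \in dissociation e & \max_(S in dissociation e) #|S| = #|D0|}.
  apply: eq_bigmax_cond; apply/card_gt0P; exists set0.
  by rewrite unfold_in; apply/forall_inP => x; rewrite inE.
have Ed : diss e = #|D0| by rewrite -Hmax.
have H := main_nat Hs Hi Hr Ht HD0 h3.
rewrite Ed.
set a := ((Delta - 1) * (Delta + 1))%N; set b := (2 ^ Delta * Delta ^ 2)%N.
have -> : (Delta - 1)%:R * (Delta + 1)%:R = a%:R :> rat by rewrite natrM.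
have pb : (0 < b)%N by rewrite /b muln_gt0 expn_gt0 /= expn_gt0 (leq_trans _ h3).
have -> : (1 / 2 : rat) * (1 + a%:R / (b%:R + a%:R)) * #|D0|%:R
   = ((b + 2 * a) * #|D0|)%N%:R / (2 * (b + a))%N%:R.
  exact: ratid.
rewrite ler_pdivrMr; last by rewrite ltr0n muln_gt0 /= ltn_addr.
by rewrite -natrM ler_nat [X in (_ <= X)%N]mulnC.
Qed.
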